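(* Let $p\ge1$, $k\ge1$, $r\in\{1,\dots,p-1\}$, $q=p-r$. Let $c\in\mathbb R^p$ and $\Phi_0,\dots,\Phi_k\in\mathbb R^{p\times p}$, with $\Phi(\lambda)=\Phi_0-\sum_{i=1}^k\Phi_i\lambda^i$, satisfy: $\Phi_0$ is invertible; $c\in\operatorname{span}\Phi(1)$ and $\operatorname{rank}\Phi(1)=r$; and $\Phi(\lambda)$ has $q$ roots at unity and all others outside the unit circle. Let $\alpha,\beta\in\mathbb R^{p\times r}$ have full column rank with $\alpha\beta^\top=-\Phi(1)$, let $\Gamma_j=-\sum_{i=j+1}^k\Phi_i$, $H=\Phi_0-\sum_{i=1}^{k-1}\Gamma_i$, and $\chi(z)=\begin{bmatrix}\alpha_\perp^\top H\\\beta^\top\end{bmatrix}z$. Then $\chi$ is invertible and for $y=(y_{(1)}^\top,y_{(2)}^\top)^\top\in\mathbb R^q\times\mathbb R^r$, $$\chi^{-1}(y)=\beta_\perp(\alpha_\perp^\top H\beta_\perp)^{-1}y_{(1)}+\{I-\beta_\perp(\alpha_\perp^\top H\beta_\perp)^{-1}\alpha_\perp^\top H\}\beta(\beta^\top\beta)^{-1}y_{(2)}.$$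
   Context: Roots of $\Phi(\lambda)$ are roots of $\det\Phi(\lambda)$. For a $p\times r$ matrix $a$ of rank $r$, $a_\perp$ denotes a $p\times(p-r)$ matrix of rank $p-r$ with $a_\perp^\top a=0$. *)

(* Defs.v *)
From HB Require Import structures.
From mathcomp Require Import all_boot all_order all_algebra.
From mathcomp Require Import complex.
Set Implicit Arguments. Unset Strict Implicit. Unset Printing Implicit Defensive.
Import Order.TTheory GRing.Theory Num.Theory.
Local Open Scope ring_scope.

Definition Phi_at1 (R : pzRingType) (p k : nat) (Phi : nat -> 'M[R]_p) : 'M[R]_p :=
  Phi 0%N - \sum_(1 <= i < k.+1) Phi i.

Definition Phi_poly (R : nzRingType) (p k : nat) (Phi : nat -> 'M[R]_p)
  : 'M[{poly R}]_p :=
  map_mx polyC (Phi 0%N) - \sum_(1 <= i < k.+1) ('X^i *: map_mx polyC (Phi i)).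

(* det Phi(lambda) as a scalar polynomial; the roots of Phi are its roots. *)
Definition Phi_det (R : comNzRingType) (p k : nat) (Phi : nat -> 'M[R]_p)
  : {poly R} := \det (Phi_poly k Phi).

Definition Gamma (R : pzRingType) (p k : nat) (Phi : nat -> 'M[R]_p) (j : nat)
  : 'M[R]_p := - \sum_(j.+1 <= i < k.+1) Phi i.

Definition Hmat (R : pzRingType) (p k : nat) (Phi : nat -> 'M[R]_p) : 'M[R]_p :=
  Phi 0%N - \sum_(1 <= i < k) Gamma k Phi i.

Definition is_perp (R : fieldType) (p r : nat) (a : 'M[R]_(p, r))
  (ap : 'M[R]_(p, p - r)) : Prop :=
  \rank ap = (p - r)%N /\ ap^T *m a = 0.

(* Main.v *)
Require Import Defs.
From HB Require Import structures.
From mathcomp Require Import all_boot all_order all_algebra.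
From mathcomp Require Import complex.
Import Order.TTheory GRing.Theory Num.Theory.
Local Open Scope ring_scope.

Lemma rowfree_eq0 (F : fieldType) m n (A : 'M[F]_(m,n)) (v : 'rV_m) :
  row_free A -> v *m A = 0 -> v = 0.
Proof. by move=> /row_freeP [B AB] vA0; rewrite -[v]mulmx1 -AB mulmxA vA0 mul0mx. Qed.

Lemma self_tr0 (R : rcfType) p (u : 'rV[R]_p) : u *m u^T = 0 -> u = 0.
Proof.
move=> /matrixP /(_ 0 0); rewrite !mxE => h.
apply/rowP => j; rewrite mxE.
have /(_ j isT) : forall i, true -> u 0 i * u^T i 0 = 0.
  apply: psumr_eq0P h => i _; by rewrite mxE -expr2 sqr_ge0.
by rewrite mxE => /eqP; rewrite mulf_eq0 orbb => /eqP.
Qed.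

Lemma gram_unit (R : rcfType) r p (X : 'M[R]_(r,p)) : row_free X -> X *m X^T \in unitmx.
Proof.
move=> hX; rewrite unitmxE unitfE; apply/negP => /det0P [v vn0 hv].
move/eqP: vn0; apply; apply: (@rowfree_eq0 _ _ _ X v hX); apply: self_tr0.
by rewrite trmx_mul mulmxA -(mulmxA v) hv mul0mx.
Qed.
Lemma dsum (V : zmodType) (F : nat -> V) m :
  \sum_(1 <= i < m) \sum_(i.+1 <= j < m.+1) F j = \sum_(1 <= i < m.+1) F i *+ i.-1.
Proof.
elim: m => [|m IH]; first by rewrite !big_geq.
case: m IH => [|m] IH; first by rewrite big_geq // big_nat1.
transitivity (\sum_(1<=i<m.+2) (\sum_(i.+1 <= j < m.+2) F j + F m.+2)).
  by apply: eq_big_nat => i /andP[_ hi]; rewrite big_nat_recr.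
rewrite big_split /= sumr_const_nat big_nat_recr //= IH big_geq // addr0.
by rewrite [in RHS]big_nat_recr.
Qed.

Lemma Hmat_eq (R : pzRingType) p k (Phi : nat -> 'M[R]_p) :
  Hmat k Phi = Phi_at1 k Phi + \sum_(1 <= i < k.+1) Phi i *+ i.
Proof.
rewrite /Hmat /Phi_at1 /Gamma sumrN opprK dsum -addrA; congr (_ + _).
rewrite -sumrN -big_split /=; apply: eq_big_nat => i /andP[hi _].
by case: i hi => // i _ /=; rewrite mulrSr addrC addrK.
Qed.

Definition Psip {R : comNzRingType} {p} k (Phi : nat -> 'M[R]_p) : 'M[{poly R}]_p :=
  - \sum_(1 <= i < k.+1) (\sum_(j < i) 'X^(i.-1 - j) * 1 ^+ j) *: map_mx polyC (Phi i).

Lemma Phi_poly_dec (R : comNzRingType) p k (Phi : nat -> 'M[R]_p) :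
  Phi_poly k Phi = map_mx polyC (Phi_at1 k Phi) + ('X - 1) *: Psip k Phi.
Proof.
rewrite /Phi_poly /Phi_at1 /Psip map_mxB map_mx_sum scalerN scaler_sumr.
under [X in _ = _ - X]eq_bigr => i _ do rewrite scalerA -subrXX expr1n.
rewrite -addrA -opprD -big_split /=; congr (_ - _); apply: eq_bigr => i _.
by rewrite scalerBl scale1r addrC subrK.
Qed.

Lemma mapC_ev (R : comNzRingType) m n (A : 'M[R]_(m,n)) x :
  map_mx (horner_eval x) (map_mx polyC A) = A.
Proof. by apply/matrixP => i j; rewrite !mxE /horner_eval hornerC. Qed.

Lemma Psip_ev1 (R : comNzRingType) p k (Phi : nat -> 'M[R]_p) :
  map_mx (horner_eval 1) (Psip k Phi) = - \sum_(1 <= i < k.+1) Phi i *+ i.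
Proof.
rewrite /Psip map_mxN map_mx_sum; congr (- _); apply: eq_bigr => i _.
rewrite map_mxZ mapC_ev /= /horner_eval horner_sum.
under eq_bigr => j _ do rewrite expr1n mulr1 hornerXn expr1n.
by rewrite sumr_const card_ord scaler_nat.
Qed.

Lemma core (R : rcfType) n r k (Phi : nat -> 'M[R]_(n + r))
  (hPhi0 : Phi 0%N \in unitmx)
  (hunit : mup 1 (Phi_det k Phi) = n)
  (alpha beta : 'M[R]_(n + r, r)) (hbeta : \rank beta = r)
  (hab : alpha *m beta^T = - Phi_at1 k Phi)
  (ap bp : 'M[R]_(n + r, n))
  (hap1 : \rank ap = n) (hap2 : ap^T *m alpha = 0)
  (hbp1 : \rank bp = n) (hbp2 : bp^T *m beta = 0) :
  ap^T *m Hmat k Phi *m bp \in unitmx.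
Proof.
rewrite unitmxE unitfE; apply: contraT; rewrite negbK => /det0P [w wn0 hw].
set z := w *m ap^T.
have z0 : z != 0.
  by rewrite /z mulmx_free_eq0 // /row_free mxrank_tr hap1.
have hP1 : Phi_at1 k Phi = - (alpha *m beta^T) by rewrite hab opprK.
have hzP1 : z *m Phi_at1 k Phi = 0.
  by rewrite hP1 mulmxN /z -mulmxA (mulmxA ap^T) hap2 mul0mx mulmx0 oppr0.
have btbp : beta^T *m bp = 0 by rewrite -[beta^T *m bp]trmxK trmx_mul trmxK hbp2 trmx0.
have hP1bp : Phi_at1 k Phi *m bp = 0 by rewrite hP1 mulNmx -mulmxA btbp mulmx0 oppr0.
set Psi1 := - \sum_(1 <= i < k.+1) Phi i *+ i.
have hH : Psi1 = Phi_at1 k Phi - Hmat k Phi by rewrite Hmat_eq opprD addNKr.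
have hzPsi : z *m Psi1 *m bp = 0.
  by rewrite hH mulmxBr mulmxBl hzP1 mul0mx sub0r /z -!mulmxA (mulmxA ap^T) hw oppr0.
set B := row_mx bp beta.
have Bu : \det B != 0.
  rewrite -det_tr tr_row_mx; apply/negP => /det0P [v vn0 hv].
  move: hv; rewrite -[v]hsubmxK mul_row_col => hv.
  have gu : beta^T *m beta \in unitmx.
    by rewrite -{2}[beta]trmxK gram_unit // /row_free mxrank_tr hbeta.
  have hr : rsubmx v = 0.
    have : (lsubmx v *m bp^T + rsubmx v *m beta^T) *m beta = 0 by rewrite hv mul0mx.
    rewrite mulmxDl -!mulmxA hbp2 mulmx0 add0r => h.
    by rewrite -[rsubmx v](mulmxK gu) h mul0mx.
  move: hv; rewrite hr mul0mx addr0 => hl.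
  have hl0 : lsubmx v = 0.
    by apply: (@rowfree_eq0 _ _ _ bp^T _ _ hl); rewrite /row_free mxrank_tr hbp1.
  by move: vn0; rewrite -[v]hsubmxK hl0 hr row_mx0 eqxx.
set P := Phi_poly k Phi.
have ev0 : map_mx (horner_eval 0) P = Phi 0%N.
  rewrite /P /Phi_poly map_mxB mapC_ev map_mx_sum big_nat_cond big1 ?subr0 //.
  move=> i /andP[/andP[hi _] _].
  by rewrite map_mxZ mapC_ev /= /horner_eval hornerXn expr0n eqn0Ngt hi scale0r.
have dP0 : Phi_det k Phi != 0.
  apply/negP => /eqP h.
  have := det_map_mx (horner_eval (0 : R)) P; rewrite ev0.
  move: hPhi0; rewrite unitmxE unitfE => /eqP hd E; apply: hd; rewrite E.
  by rewrite /P -/(Phi_det k Phi) h /= /horner_eval horner0.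
set C := Psip k Phi *m map_mx polyC bp.
set D := P *m map_mx polyC beta.
have key : \det P * (\det B)%:P = ('X - 1) ^+ n * \det (row_mx C D).
  rewrite -det_map_mx -det_mulmx /B map_row_mx mul_mx_row.
  have -> : P *m map_mx polyC bp = ('X - 1) *: C.
    by rewrite /P Phi_poly_dec mulmxDl -map_mxM hP1bp map_mx0 add0r -scalemxAl.
  have -> : row_mx (('X - 1) *: C) D = row_mx C D *m block_mx (('X - 1)%:M) 0 0 1%:M.
    by rewrite mul_row_block !mulmx0 mul_mx_scalar mulmx1 addr0 add0r.
  by rewrite det_mulmx det_ublock det_scalar det1 mulr1 mulrC.
have g1 : root (\det (row_mx C D)) 1.
  rewrite /root -/(horner_eval 1 _) -det_map_mx map_row_mx /C /D !map_mxM !mapC_ev.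
  rewrite Psip_ev1 /P Phi_poly_dec map_mxD map_mxZ mapC_ev /= /horner_eval.
  rewrite hornerD hornerN hornerX hornerC subrr scale0r addr0 -/Psi1.
  apply/det0P; exists z => //.
  by rewrite mul_mx_row !mulmxA hzPsi hzP1 mul0mx row_mx0.
have hdiv : ('X - 1%:P) ^+ n.+1 %| Phi_det k Phi.
  have h1 : ('X - 1%:P) ^+ n.+1 %| \det P * (\det B)%:P.
    rewrite key polyC1 exprSr dvdp_mul // dvdp_XsubCl //.
  have -> : Phi_det k Phi = \det P * (\det B)%:P * ((\det B)^-1)%:P.
    by rewrite -mulrA -polyCM divff // mulr1.
  exact: dvdp_mulr.
by move: hdiv; rewrite -mup_geq // hunit ltnn.
Qed.
Arguments core {R n r k Phi} hPhi0 hunit {alpha beta} hbeta hab {ap bp}.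

Lemma core_gen (R : rcfType) p n r k (e : (n + r)%N = p) (Phi : nat -> 'M[R]_p)
  (hPhi0 : Phi 0%N \in unitmx)
  (hunit : mup 1 (Phi_det k Phi) = n)
  (alpha beta : 'M[R]_(p, r)) (hbeta : \rank beta = r)
  (hab : alpha *m beta^T = - Phi_at1 k Phi)
  (ap bp : 'M[R]_(p, n))
  (hap1 : \rank ap = n) (hap2 : ap^T *m alpha = 0)
  (hbp1 : \rank bp = n) (hbp2 : bp^T *m beta = 0) :
  ap^T *m Hmat k Phi *m bp \in unitmx.
Proof. by subst p; apply: (core hPhi0 hunit hbeta hab). Qed.
Arguments core_gen {R p n r k} e {Phi} hPhi0 hunit {alpha beta} hbeta hab {ap bp}.

Theorem lemmaE1 (R : rcfType) (p k r : nat)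
  (hk : (1 <= k)%N) (hr1 : (1 <= r)%N) (hrp : (r < p)%N)
  (c : 'cV[R]_p) (Phi : nat -> 'M[R]_p)
  (hPhi0 : Phi 0%N \in unitmx)
  (hc : exists v : 'cV[R]_p, c = Phi_at1 k Phi *m v)
  (hrank : \rank (Phi_at1 k Phi) = r)
  (hunit : mup 1 (Phi_det k Phi) = (p - r)%N)
  (hout : forall z : R[i],
      root (map_poly (real_complex R) (Phi_det k Phi)) z ->
      z = 1 \/ 1 < `|z|)
  (alpha beta : 'M[R]_(p, r))
  (halpha : \rank alpha = r) (hbeta : \rank beta = r)
  (hab : alpha *m beta^T = - Phi_at1 k Phi)
  (alpha_perp beta_perp : 'M[R]_(p, p - r))
  (hap : is_perp alpha alpha_perp) (hbp : is_perp beta beta_perp) :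
  let H := Hmat k Phi in
  let chi : 'M[R]_(p - r + r, p) := col_mx (alpha_perp^T *m H) beta^T in
  let M := alpha_perp^T *m H *m beta_perp in
  M \in unitmx /\
  exists chi_inv : 'cV[R]_(p - r + r) -> 'cV[R]_p,
    cancel (fun x => chi *m x) chi_inv /\
    cancel chi_inv (fun x => chi *m x) /\
    forall (y1 : 'cV[R]_(p - r)) (y2 : 'cV[R]_r),
      chi_inv (col_mx y1 y2) =
        beta_perp *m invmx M *m y1
        + (1%:M - beta_perp *m invmx M *m alpha_perp^T *m H)
            *m beta *m invmx (beta^T *m beta) *m y2.
Proof.
move=> H chi M.
case: hap => hap1 hap2; case: hbp => hbp1 hbp2.
have Mu : M \in unitmx.
  exact: (core_gen (subnK (ltnW hrp)) hPhi0 hunit hbeta hab hap1 hap2 hbp1 hbp2).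
have Gu : beta^T *m beta \in unitmx.
  by rewrite -{2}[beta]trmxK gram_unit // /row_free mxrank_tr hbeta.
have btbp : beta^T *m beta_perp = 0.
  by rewrite -[beta^T *m beta_perp]trmxK trmx_mul trmxK hbp2 trmx0.
set X : 'M[R]_(p, p - r + r) := row_mx (beta_perp *m invmx M)
  ((1%:M - beta_perp *m invmx M *m alpha_perp^T *m H) *m beta *m invmx (beta^T *m beta)).
have chiX : chi *m X = 1%:M.
  rewrite /chi /X mul_col_row [RHS](scalar_mx_block (p - r) r).
  congr block_mx.
  - by rewrite !mulmxA -/M mulmxV.
  - rewrite !mulmxA mulmxBr mulmx1 !mulmxA -/M mulmxV // mul1mx subrr.
    by rewrite !mul0mx.
  - by rewrite mulmxA btbp mul0mx.
  - rewrite !mulmxA mulmxBr mulmx1 !mulmxA btbp !mul0mx subr0 mulmxV //.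
have Xchi : X *m chi = 1%:M.
  have : row_free X.
    rewrite /row_free eqn_leq rank_leq_row /=.
    have := mxrankM_maxr chi X; rewrite chiX mxrank1.
    by apply: leq_trans; rewrite subnK // ltnW.
  case/row_freeP => K XK.
  by rewrite -[X *m chi]mulmx1 -XK mulmxA -(mulmxA X) chiX mulmx1.
split => //.
exists (fun y => X *m y); split; [|split].
- by move=> x /=; rewrite mulmxA Xchi mul1mx.
- by move=> y /=; rewrite mulmxA chiX mul1mx.
- by move=> y1 y2; rewrite /X mul_row_col.
Qed.
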